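(* Let $Q=(q_n)_{n\ge1}$ be a basic sequence that is infinite in limit. Then the set $\Theta_Q$ is perfect.
   Context: A basic sequence is a sequence $Q=(q_n)_{n\ge1}$ of integers with $q_n\ge 2$; it is infinite in limit if $q_n\to\infty$. $\mathbb{N}$ denotes the positive integers. For each positive integer $j$ let $\nu_j=\min\{N : q_m\ge 2j^2 \text{ for all } m\ge N\}$. Define $l_1=\max(\nu_2-1,1)$ and, recursively for $i\ge 2$, $l_i=\max\big(\min\{k\in\mathbb{N} : l_1+2l_2+\cdots+(i-1)l_{i-1}+ik\ge \nu_{i+1}-1\},1\big)$. Put $L_i=\sum_{j=1}^i jl_j$ (with $L_0=0$). Let $S_Q=\{(a,b,c)\in\mathbb{N}^3 : b\le l_a,\ c\le a\}$ and $\phi_Q(a,b,c)=L_{a-1}+(b-1)a+c$; $\phi_Q$ is a bijection $S_Q\to\mathbb{N}$. A $Q$-special sequence is a family of integers $F=(F_{(a,b,c)})_{(a,b,c)\in S_Q}$ with $F_{(a,b,1)}=0$ for all $(a,b,1)\in S_Q$ and $\frac{F_{(a,b,c)}}{q_{\phi_Q(a,b,c)}}\in\left[\frac{c-1}{a}-\frac{1}{2a^2},\frac{c-1}{a}+\frac{1}{2a^2}\right]$ for $(a,b,c)\in S_Q$ with $c>1$. Let $\Gamma_Q$ be the set of $Q$-special sequences. For $F\in\Gamma_Q$ put $E_{F,n}=F_{\phi_Q^{-1}(n)}$ and $x_F=\sum_{n=1}^\infty \frac{E_{F,n}}{q_1q_2\cdots q_n}$. Define $\Theta_Q=\{x_F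 : F\in\Gamma_Q\}\subseteq[0,1)$. *)

(* Defs.v *)
From HB Require Import structures.
From mathcomp Require Import all_boot all_order all_algebra.
From mathcomp Require Import all_classical all_reals all_analysis.
From mathcomp Require Import zify.
Set Implicit Arguments. Unset Strict Implicit. Unset Printing Implicit Defensive.
Import Order.TTheory GRing.Theory Num.Theory.
Import numFieldNormedType.Exports.
Local Open Scope classical_set_scope.
Local Open Scope ring_scope.

(* A sequence q : nat -> nat; only the values q n for n >= 1 are used. *)

Definition basic_seq (q : nat -> nat) : Prop := forall n, (1 <= n)%N -> (2 <= q n)%N.

Definition infinite_in_limit (q : nat -> nat) : Prop :=
  forall M : nat, exists N : nat, forall n, (N <= n)%N -> (M <= q n)%N.

Definition nu_pred (q : nat -> nat) (j : nat) : pred nat :=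
  fun N => (0 < N)%N && `[< forall m, (N <= m)%N -> (2 * j ^ 2 <= q m)%N >].

(* nu_j = min { N in N : q_m >= 2 j^2 for all m >= N }  (0 if no such N) *)
Definition nu (q : nat -> nat) (j : nat) : nat :=
  match pselect (exists N, nu_pred q j N) with
  | left h => ex_minn h
  | right _ => 0%N
  end.

(* for i = i'.+1 : predicate { k in N : Lprev + i * k >= nu_{i+1} - 1 } *)
Definition lstep_pred (Lprev i nv : nat) : pred nat :=
  fun k => (0 < k)%N && (nv - 1 <= Lprev + i * k)%N.

Lemma lstep_ex (Lprev i' nv : nat) : exists k, lstep_pred Lprev i'.+1 nv k.
Proof.
exists nv.+1; rewrite /lstep_pred /=; lia.
Qed.

(* l_i computed from i' = i - 1 and Lprev = L_{i-1} *)
Definition lfun (q : nat -> nat) (i' Lprev : nat) : nat :=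
  if i' == 0%N then maxn (nu q 2 - 1) 1
  else maxn (ex_minn (lstep_ex Lprev i' (nu q i'.+2))) 1.

Fixpoint Lsum (q : nat -> nat) (i : nat) : nat :=
  match i with
  | 0 => 0%N
  | i'.+1 => (Lsum q i' + i'.+1 * lfun q i' (Lsum q i'))%N
  end.

Definition l_ (q : nat -> nat) (i : nat) : nat := lfun q i.-1 (Lsum q i.-1).

Definition S_Q (q : nat -> nat) : set (nat * nat * nat) :=
  [set t | let: (a, b, c) := t in
           [/\ (1 <= a)%N, (1 <= b)%N, (1 <= c)%N, (b <= l_ q a)%N & (c <= a)%N]].

Definition phi_Q (q : nat -> nat) (t : nat * nat * nat) : nat :=
  let: (a, b, c) := t in (Lsum q a.-1 + (b - 1) * a + c)%N.

Definition phi_inv (q : nat -> nat) (n : nat) : nat * nat * nat :=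
  xget (0, 0, 0)%N [set t | S_Q q t /\ phi_Q q t = n].

(* Q-special sequences; a family indexed by S_Q is represented by a function
   on triples, whose values outside S_Q are irrelevant. *)
Definition Q_special {R : realType} (q : nat -> nat)
    (F : nat * nat * nat -> int) : Prop :=
  forall a b c, S_Q q (a, b, c) ->
    if c == 1%N then F (a, b, c) = 0
    else ((F (a, b, c))%:~R / (q (phi_Q q (a, b, c)))%:R : R)
           \in `[ (c - 1)%:R / a%:R - 1 / (2 * (a%:R) ^+ 2),
                  (c - 1)%:R / a%:R + 1 / (2 * (a%:R) ^+ 2) ].

Definition E_F (q : nat -> nat) (F : nat * nat * nat -> int) (n : nat) : int :=
  F (phi_inv q n).

Definition x_F {R : realType} (q : nat -> nat) (F : nat * nat * nat -> int) : R :=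
  limn (fun N : nat =>
    \sum_(1 <= n < N) ((E_F q F n)%:~R / (\prod_(1 <= k < n.+1) (q k)%:R)) : R).

Definition Theta_Q {R : realType} (q : nat -> nat) : set R :=
  [set x | exists F, @Q_special R q F /\ x = x_F q F].

(* Main.v *)
Require Import Defs.
From HB Require Import structures.
From mathcomp Require Import all_boot all_order all_algebra.
From mathcomp Require Import all_classical all_reals all_analysis.
From mathcomp Require Import zify ring lra.
Import numFieldNormedType.Exports.
Set Implicit Arguments. Unset Strict Implicit. Unset Printing Implicit Defensive.
Import Order.TTheory GRing.Theory Num.Theory.
Local Open Scope classical_set_scope.

Section Comb.
Variable q : nat -> nat.

Lemma l_pos a : (0 < l_ q a)%N.
Proof. by rewrite /l_ /lfun; case: ifP => _; rewrite leq_max orbT. Qed.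

Lemma LsumS a : Lsum q a.+1 = (Lsum q a + a.+1 * l_ q a.+1)%N.
Proof. by []. Qed.

Lemma Lsum_mono a b : (a <= b)%N -> (Lsum q a <= Lsum q b)%N.
Proof.
move=> /subnK <-; elim: (b - a)%N => [|k IH] //=.
apply: leq_trans IH _; exact: leq_addr.
Qed.

Lemma Lsum_ge a : (a <= Lsum q a)%N.
Proof.
elim: a => [|a IH] //; rewrite LsumS; have := l_pos a.+1; nia.
Qed.

Lemma phi_bounds a b c : S_Q q (a, b, c) ->
  (Lsum q a.-1 < phi_Q q (a, b, c) <= Lsum q a)%N.
Proof.
case=> a1 b1 c1 bl ca; rewrite /phi_Q; case: a a1 bl ca => [|a] // _ bl ca.
rewrite (LsumS a) [a.+1.-1]/=; apply/andP; split; first nia.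
have h1 : (b * a.+1 <= l_ q a.+1 * a.+1)%N by rewrite leq_mul2r bl orbT.
have h2 : ((b - 1) * a.+1 + a.+1 = b * a.+1)%N by rewrite -mulSnr; congr (_ * _)%N; nia.
rewrite [(a.+1 * _)%N]mulnC; nia.
Qed.

Lemma phi_inj t t' : S_Q q t -> S_Q q t' -> phi_Q q t = phi_Q q t' -> t = t'.
Proof.
case: t => [[a b] c]; case: t' => [[a' b'] c'] St St' E.
have /andP[h1 h2] := phi_bounds St; have /andP[h1' h2'] := phi_bounds St'.
have aa : a = a'.
  case: St => a1 _ _ _ _; case: St' => a1' _ _ _ _.
  apply/eqP; rewrite eqn_leq; apply/andP; split; rewrite leqNgt; apply/negP => lt.
  - have := Lsum_mono (_ : (a' <= a.-1)%N); nia.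
  - have := Lsum_mono (_ : (a <= a'.-1)%N); nia.
subst a'; move: E; rewrite /phi_Q => E.
case: St => a1 b1 c1 _ ca; case: St' => _ b1' c1' _ ca'.
have E2 : ((b - 1) * a + c = (b' - 1) * a + c')%N by nia.
have bb : b = b'.
  apply/eqP; rewrite eqn_leq; apply/andP; split; rewrite leqNgt; apply/negP => lt.
  - have : ((b' - 1) * a + a <= (b - 1) * a)%N.
      by rewrite -mulSnr; apply: leq_mul => //; nia.
    nia.
  - have : ((b - 1) * a + a <= (b' - 1) * a)%N.
      by rewrite -mulSnr; apply: leq_mul => //; nia.
    nia.
subst b'; congr (_, _, _); nia.
Qed.

Lemma phi_surj n : (0 < n)%N -> exists t, S_Q q t /\ phi_Q q t = n.
Proof.
move=> n0.
have ex : exists a, (n <= Lsum q a)%N by exists n; exact: Lsum_ge.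
case: (ex_minnP ex) => a na amin.
have a0 : (0 < a)%N by case: a na {amin} => //=; nia.
have lt : (Lsum q a.-1 < n)%N.
  rewrite ltnNge; apply/negP => h; have := amin _ h; nia.
move: na lt; case: a a0 {amin} => [|a] // _; rewrite LsumS /= => na lt.
set r := (n - Lsum q a - 1)%N.
have rlt : (r < a.+1 * l_ q a.+1)%N by rewrite /r; nia.
exists (a.+1, (r %/ a.+1).+1, (r %% a.+1).+1); split.
- rewrite /S_Q /=; split => //; first by rewrite ltn_divLR // mulnC.
  by rewrite ltn_pmod.
- rewrite /phi_Q /= subn1 /=.
  have := divn_eq r a.+1; rewrite /r; nia.
Qed.

Lemma phi_inv_spec n : (0 < n)%N -> S_Q q (phi_inv q n) /\ phi_Q q (phi_inv q n) = n.
Proof. by move=> /phi_surj ex; exact: (xgetPex (0,0,0)%N ex). Qed.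

Lemma phi_inv_phi t : S_Q q t -> phi_inv q (phi_Q q t) = t.
Proof.
move=> St; case: t St => [[a b] c] St.
have /andP[h1 _] := phi_bounds St.
have pos : (0 < phi_Q q (a, b, c))%N by nia.
have [S1 E1] := phi_inv_spec pos.
exact: phi_inj S1 St E1.
Qed.

Hypothesis qbasic : basic_seq q.
Hypothesis qinf : infinite_in_limit q.

Lemma nu_spec j m : (nu q j <= m)%N -> (2 * j ^ 2 <= q m)%N.
Proof.
rewrite /nu; case: pselect => [h|nh].
  by case: (ex_minnP h) => N /andP[_ /asboolP H] _; exact: H.
exfalso; apply: nh; case: (qinf (2 * j ^ 2)) => N HN.
exists N.+1; apply/andP; split => //; apply/asboolP => m' hm; apply: HN; nia.
Qed.

Lemma Lsum_nu a : (2 <= a)%N -> (nu q a - 1 <= Lsum q a.-1)%N.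
Proof.
case: a => [|[|[|i']]] // _.
  have h : (nu q 2 - 1 <= lfun q 0 0)%N by rewrite /lfun /= leq_maxl.
  have -> : Lsum q 2.-1 = (0 + 1 * lfun q 0 0)%N by []. nia.
have -> : Lsum q i'.+3.-1 = (Lsum q i'.+1 + i'.+2 * lfun q i'.+1 (Lsum q i'.+1))%N by [].
have -> : lfun q i'.+1 (Lsum q i'.+1) = maxn (ex_minn (lstep_ex (Lsum q i'.+1) i'.+1 (nu q i'.+3))) 1 by [].
case: (ex_minnP (lstep_ex (Lsum q i'.+1) i'.+1 (nu q i'.+3))) => k /andP[k0 hk] _.
have : (k <= maxn k 1)%N by rewrite leq_maxl.
nia.
Qed.

Lemma q_big t : S_Q q t -> (2 * t.1.1 ^ 2 <= q (phi_Q q t))%N.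
Proof.
case: t => [[a b] c] St /=; have /andP[h1 _] := phi_bounds St.
case: St => a1 _ c1 _ _.
case: a a1 h1 => [|[|a]] // _ h1.
  by rewrite muln1; apply: qbasic; rewrite /phi_Q; nia.
apply: nu_spec; have h2 : (2 <= a.+2)%N by [].
have := Lsum_nu h2; nia.
Qed.

End Comb.
Local Open Scope ring_scope.

Section Reals.
Variable R : realType.
Variable q : nat -> nat.
Hypothesis qbasic : basic_seq q.

Definition Qp (n : nat) : R := \prod_(1 <= k < n.+1) (q k)%:R.
Definition Ssum (e : nat -> int) (N : nat) : R :=
  \sum_(1 <= n < N) ((e n)%:~R / (\prod_(1 <= k < n.+1) (q k)%:R)).
Definition Xval (e : nat -> int) : R := limn (Ssum e).
Definition Dok (e : nat -> int) := forall m, (1 <= m)%N -> 0 <= e m /\ e m + 2 <= (q m)%:Z.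

Lemma Qp0 : Qp 0 = 1.
Proof. by rewrite /Qp big_geq. Qed.

Lemma QpS n : Qp n.+1 = Qp n * (q n.+1)%:R.
Proof. by rewrite /Qp big_nat_recr. Qed.

Lemma q2 n : (1 <= n)%N -> 2 <= (q n)%:R :> R.
Proof. by move=> /qbasic h; rewrite (ler_nat R 2). Qed.

Lemma Qp_ge n : n.+1%:R <= Qp n.
Proof.
elim: n => [|n IH]; first by rewrite Qp0.
rewrite QpS; have h := q2 (ltn0Sn n).
have -> : n.+2%:R = n.+1%:R + 1 :> R by rewrite -natr1.
have h0 : 1 <= n.+1%:R :> R by rewrite ler1n.
have h3 : n.+1%:R * 2 <= Qp n * (q n.+1)%:R by apply: ler_pM.
lra.
Qed.

Lemma Qp_gt0 n : 0 < Qp n.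
Proof. by apply: lt_le_trans (Qp_ge n). Qed.

Lemma Ssum1 e : Ssum e 1 = 0.
Proof. by rewrite /Ssum big_geq. Qed.

Lemma Ssum0 e : Ssum e 0 = 0.
Proof. by rewrite /Ssum big_geq. Qed.

Lemma SsumS e N : (1 <= N)%N -> Ssum e N.+1 = Ssum e N + (e N)%:~R / Qp N.
Proof. by move=> h; rewrite /Ssum big_nat_recr. Qed.

Lemma tele n : ((q n.+1)%:R - 1) / Qp n.+1 = 1 / Qp n - 1 / Qp n.+1.
Proof.
rewrite QpS; have h := Qp_gt0 n; have h2 := q2 (ltn0Sn n).
field; apply/andP; split; rewrite gt_eqF //; lra.
Qed.

Lemma digit_le e m : Dok e -> (1 <= m)%N ->
  (e m)%:~R / Qp m <= ((q m)%:R - 2) / Qp m.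
Proof.
move=> D m1; have [h1 h2] := D m m1.
rewrite ler_pM2r ?invr_gt0 ?Qp_gt0 //.
have : (e m + 2)%:~R <= (q m)%:Z%:~R :> R by rewrite ler_int.
rewrite intrD /=; lra.
Qed.

Lemma digit_ge0 e m : Dok e -> (1 <= m)%N -> 0 <= (e m)%:~R / Qp m.
Proof.
move=> D m1; have [h1 h2] := D m m1.
by rewrite divr_ge0 ?ler0z // ltW // Qp_gt0.
Qed.

Lemma Supper e n k : Dok e ->
  Ssum e (n.+1 + k) <= Ssum e n.+1 + 1 / Qp n - 1 / Qp (n + k).
Proof.
move=> D; elim: k => [|k IH]; first by rewrite !addn0; lra.
have -> : (n.+1 + k.+1 = (n + k).+2)%N by lia.
rewrite SsumS //; have -> : (n + k.+1 = (n + k).+1)%N by lia.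
have h1 := digit_le D (ltn0Sn (n + k)); have h2 := tele (n + k).
rewrite (_ : (n.+1 + k = (n + k).+1)%N) in IH; last by lia.
have h3 : 0 < 1 / Qp (n + k).+1 by rewrite divr_gt0 // Qp_gt0.
have h4 : ((q (n + k).+1)%:R - 2) / Qp (n + k).+1 =
   ((q (n + k).+1)%:R - 1) / Qp (n + k).+1 - 1 / Qp (n + k).+1 by rewrite -mulrBl; congr (_ * _); lra.
lra.
Qed.

Lemma Snondec e : Dok e -> nondecreasing_seq (Ssum e).
Proof.
move=> D; apply/nondecreasing_seqP => N.
case: N => [|N]; first by rewrite Ssum0 Ssum1.
rewrite (SsumS e (ltn0Sn N)); have := digit_ge0 D (ltn0Sn N); lra.
Qed.

Lemma Sle1 e N : Dok e -> Ssum e N <= 1.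
Proof.
move=> D; case: N => [|N]; first by rewrite Ssum0.
have := Supper 0 N D; rewrite add1n Ssum1 Qp0 add0r divr1.
have : 0 < 1 / Qp (0 + N) by rewrite divr_gt0 // Qp_gt0.
lra.
Qed.

Lemma Scvg e : Dok e -> cvgn (Ssum e).
Proof.
move=> D; apply: nondecreasing_is_cvgn; first exact: Snondec.
by exists 1 => _ [N _ <-]; exact: Sle1.
Qed.

Lemma Xlow e N : Dok e -> Ssum e N <= Xval e.
Proof. by move=> D; apply: nondecreasing_cvgn_le; [exact: Snondec|exact: Scvg]. Qed.

Lemma Xup e n : Dok e -> Xval e <= Ssum e n.+1 + 1 / Qp n.
Proof.
move=> D; apply: limr_le; first exact: Scvg.
exists n.+1 => // k /= hk.
have := Supper n (k - n.+1) D; rewrite subnKC //.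
have : 0 < 1 / Qp (n + (k - n.+1)) by rewrite divr_gt0 // Qp_gt0.
lra.
Qed.

Lemma Xstrict e n : Dok e -> Xval e <= Ssum e n.+1 + 1 / Qp n - 1 / Qp n.+1.
Proof.
move=> D; apply: le_trans (Xup n.+1 D) _.
rewrite SsumS //; have := digit_le D (ltn0Sn n).
have := tele n; set b := Qp n.+1; set c := (q _)%:R.
rewrite !mulrBl !mul1r => t h.
lra.
Qed.

Lemma Sagree e e' n : (forall m, (1 <= m <= n)%N -> e m = e' m) ->
  Ssum e n.+1 = Ssum e' n.+1.
Proof.
move=> H; rewrite /Ssum; apply: eq_big_nat => m /andP[m1 m2].
by rewrite H // m1 -ltnS.
Qed.

Lemma Xclose e e' n : Dok e -> Dok e' ->
  (forall m, (1 <= m <= n)%N -> e m = e' m) -> `|Xval e - Xval e'| <= 1 / Qp n.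
Proof.
move=> D D' H; have := Sagree H.
have := Xlow n.+1 D; have := Xlow n.+1 D'; have := Xup n D; have := Xup n D'.
move=> *; rewrite ler_norml; apply/andP; split; lra.
Qed.

Lemma Xlt e e' n : Dok e -> Dok e' ->
  (forall m, (1 <= m <= n)%N -> e m = e' m) -> (e n.+1 < e' n.+1)%R ->
  Xval e < Xval e'.
Proof.
move=> D D' H lt.
have S1 : Ssum e n.+2 = Ssum e' n.+1 + (e n.+1)%:~R / Qp n.+1.
  by rewrite SsumS // (Sagree H).
have S2 : Ssum e' n.+2 = Ssum e' n.+1 + (e' n.+1)%:~R / Qp n.+1 by rewrite SsumS.
have h1 := Xstrict n.+1 D; have h2 := Xlow n.+2 D'.
have hq := Qp_gt0 n.+1; have hq2 := Qp_gt0 n.+2.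
have lt' : (e n.+1)%:~R + 1 <= (e' n.+1)%:~R :> R.
  by rewrite -[Xval in _ + Xval <= _]/((1 : int)%:~R) -intrD ler_int; lia.
have : ((e n.+1)%:~R + 1) / Qp n.+1 <= (e' n.+1)%:~R / Qp n.+1.
  by rewrite ler_pM2r // invr_gt0.
rewrite mulrDl => h3.
have : 0 < 1 / Qp n.+2 by rewrite divr_gt0.
rewrite mul1r in h3 *; lra.
Qed.

Lemma Qp_small (d : R) : 0 < d -> exists N, forall n, (N <= n)%N -> 1 / Qp n < d.
Proof.
move=> d0; exists (Num.truncn d^-1) => n hn.
have h1 := truncnS_gt d^-1.
have h2 : (Num.truncn d^-1).+1%:R <= n.+1%:R :> R by rewrite ler_nat.
have h3 := Qp_ge n.
rewrite mul1r -(invrK d) ltf_pV2 ?posrE ?invr_gt0 ?Qp_gt0 //.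
lra.
Qed.

End Reals.

Section RealArith.
Variable R : realType.

Lemma real_up (A C Qr y : R) : 2 <= A -> C <= A -> 2 * A ^+ 2 <= Qr ->
  y <= (C - 1) / A + 1 / (2 * A ^+ 2) -> y * Qr + 2 <= Qr.
Proof.
move=> A2 CA AQ hy.
have A0 : A != 0 by rewrite gt_eqF //; lra.
set u := A^-1.
have Au : A * u = 1 by rewrite /u divff.
have u0 : 0 < u by rewrite /u invr_gt0; lra.
have e1 : (C - 1) / A = (C - 1) * u by [].
have e2 : 1 / (2 * A ^+ 2) = u * u / 2.
  by rewrite /u; field; rewrite A0.
rewrite e1 e2 in hy.
have hu : u <= 1 / 2.
  have : 2 * u <= A * u by rewrite ler_pM2r.
  lra.
have hy2 : y <= 1 - u + u * u / 2.
  have : (C - 1) * u <= (A - 1) * u by rewrite ler_pM2r //; lra.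
  rewrite [(A - 1) * u]mulrBl Au mul1r; lra.
have Q0 : 0 < Qr.
  have : 0 < A ^+ 2 by rewrite exprn_gt0 //; lra.
  lra.
have hQ : 2 <= Qr * (u * u).
  have : 2 * A ^+ 2 * (u * u) <= Qr * (u * u) by rewrite ler_pM2r // mulr_gt0.
  have -> : 2 * A ^+ 2 * (u * u) = 2 * ((A * u) * (A * u)) by ring.
  by rewrite Au !mulr1.
have : y * Qr <= (1 - u + u * u / 2) * Qr by rewrite ler_pM2r.
have : 0 <= Qr * (u - u * u / 2 - u * u).
  apply: mulr_ge0; first lra.
  have : u * u <= u * (1 / 2) by rewrite ler_pM2l.
  lra.
nra.
Qed.

Lemma real_low (A C y : R) : 2 <= A -> 2 <= C ->
  (C - 1) / A - 1 / (2 * A ^+ 2) <= y -> 0 < y.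
Proof.
move=> A2 C2 hy.
have A0 : A != 0 by rewrite gt_eqF //; lra.
set u := A^-1.
have Au : A * u = 1 by rewrite /u divff.
have u0 : 0 < u by rewrite /u invr_gt0; lra.
have e2 : 1 / (2 * A ^+ 2) = u * u / 2.
  by rewrite /u; field; rewrite A0.
have e1 : (C - 1) / A = (C - 1) * u by [].
rewrite e1 e2 in hy.
have hu : u <= 1 / 2.
  have : 2 * u <= A * u by rewrite ler_pM2r.
  lra.
have : 1 * u <= (C - 1) * u by rewrite ler_pM2r //; lra.
have : u * u <= u * (1 / 2) by rewrite ler_pM2l.
lra.
Qed.

End RealArith.

Lemma real_nb (R : realType) (A K Qr y : R) : 2 <= A -> 2 * A ^+ 2 <= Qr ->
  K / A - 1 / (2 * A ^+ 2) <= y <= K / A + 1 / (2 * A ^+ 2) ->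
  (K / A - 1 / (2 * A ^+ 2) <= y + 1 / Qr <= K / A + 1 / (2 * A ^+ 2)) \/
  (K / A - 1 / (2 * A ^+ 2) <= y - 1 / Qr <= K / A + 1 / (2 * A ^+ 2)).
Proof.
move=> A2 AQ /andP[h1 h2].
have A0 : 0 < 2 * A ^+ 2 by rewrite mulr_gt0 // exprn_gt0 //; lra.
have Q0 : 0 < Qr by lra.
have hw : 1 / Qr <= 1 / (2 * A ^+ 2) by rewrite !div1r lef_pV2 // posrE.
have w0 : 0 < 1 / Qr by rewrite divr_gt0.
case: (lerP (y + 1 / Qr) (K / A + 1 / (2 * A ^+ 2))) => h.
  by left; apply/andP; split; lra.
by right; apply/andP; split; lra.
Qed.

Section Main.
Variable R : realType.
Variable q : nat -> nat.
Hypothesis qbasic : basic_seq q.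
Hypothesis qinf : infinite_in_limit q.

Definition Pt (t : nat * nat * nat) (x : int) : Prop :=
  let: (a, b, c) := t in
    if c == 1%N then x = 0
    else ((x%:~R / (q (phi_Q q (a, b, c)))%:R : R)
           \in `[ (c - 1)%:R / a%:R - 1 / (2 * (a%:R) ^+ 2),
                  (c - 1)%:R / a%:R + 1 / (2 * (a%:R) ^+ 2) ]).

Lemma specialE F : @Q_special R q F <-> forall t, S_Q q t -> Pt t (F t).
Proof. by split => H; [case=> [[a b] c]; exact: H | move=> a b c; exact: (H (a, b, c))]. Qed.

Definition Gok (e : nat -> int) := forall n, (1 <= n)%N -> Pt (phi_inv q n) (e n).

Lemma Dok_of_G e : Gok e -> Dok q e.
Proof.
move=> Ge m m1; have [St Ep] := phi_inv_spec q m1; have Gm := Ge m m1.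
move: St Ep Gm; case: (phi_inv q m) => [[a b] c] St Ep.
have qb : (2 * a ^ 2 <= q m)%N by rewrite -Ep; exact: (q_big qbasic qinf St).
rewrite /Pt Ep.
case: eqP => [_ -> | c1].
  by split => //; have := qbasic m1; lia.
rewrite in_itv /= => /andP[lo hi].
case: St => a1 b1 c1' bl ca.
have c2 : (2 <= c)%N by lia.
have A2 : 2 <= a%:R :> R by rewrite (ler_nat R 2); lia.
have CA : c%:R <= a%:R :> R by rewrite ler_nat.
have C2 : 2 <= c%:R :> R by rewrite (ler_nat R 2).
have AQ : 2 * a%:R ^+ 2 <= (q m)%:R :> R.
  by rewrite -natrX -(natrM R 2) ler_nat.
have Q0 : 0 < (q m)%:R :> R by have := qbasic m1; rewrite ltr0n; lia.
rewrite natrB // in lo hi.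
have hup := real_up A2 CA AQ hi.
have hlow := real_low A2 C2 lo.
rewrite divfK ?gt_eqF // in hup.
split.
  rewrite -(ler_int R); have : 0 < (e m)%:~R / (q m)%:R :> R by [].
  by rewrite pmulr_lgt0 ?invr_gt0 // => /ltW.
by rewrite -(ler_int R) intrD -pmulrn.
Qed.


Lemma G_of_special F : @Q_special R q F -> Gok (E_F q F).
Proof.
move=> /specialE H n n1; have [St _] := phi_inv_spec q n1.
exact: H.
Qed.

Lemma X_ext e e' : (forall n, (1 <= n)%N -> e n = e' n) -> Xval R q e = Xval R q e'.
Proof.
move=> H; have E : Ssum R q e = Ssum R q e'.
  apply: funext => N; rewrite /Ssum.
  by apply: eq_big_nat => n /andP[n1 _]; rewrite H.
by rewrite /Xval E.
Qed.

Lemma special_of_G e : Gok e -> and (@Q_special R q (fun t => e (phi_Q q t)))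
  (forall n, (1 <= n)%N -> E_F q (fun t => e (phi_Q q t)) n = e n).
Proof.
move=> Ge; split.
  apply/specialE => t St.
  have p1 : (1 <= phi_Q q t)%N.
    by case: t St => [[a b] c] St; have := phi_bounds St; lia.
  by have := Ge _ p1; rewrite phi_inv_phi.
by move=> n n1; rewrite /E_F; have [_ ->] := phi_inv_spec q n1.
Qed.

Lemma ThetaE x : @Theta_Q R q x <-> exists e, Gok e /\ x = Xval R q e.
Proof.
split.
  by case=> F [SF ->]; exists (E_F q F); split => //; exact: G_of_special.
case=> e [Ge ->]; have [SF EF] := special_of_G Ge.
by exists (fun t => e (phi_Q q t)); split => //; apply: X_ext => n n1; rewrite EF.
Qed.

Definition upd (e : nat -> int) (n : nat) (d : int) : nat -> int :=
  fun m => if m == n then d else e m.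

Lemma G_upd e n d : Gok e -> Pt (phi_inv q n) d -> Gok (upd e n d).
Proof.
by move=> Ge Pd m m1; rewrite /upd; case: eqP => [->|_] //; exact: Ge.
Qed.

Lemma nb e n : Gok e -> (1 <= n)%N -> ((phi_inv q n).2 != 1)%N ->
  exists s : int, (s = 1 \/ s = -1) /\ Pt (phi_inv q n) (e n + s).
Proof.
move=> Ge n1 cn; have [St Ep] := phi_inv_spec q n1; have Gn := Ge n n1.
move: St Ep Gn cn; case: (phi_inv q n) => [[a b] c] St Ep.
have qb : (2 * a ^ 2 <= q n)%N by rewrite -Ep; exact: (q_big qbasic qinf St).
rewrite /Pt Ep /= => + c1; rewrite (negbTE c1) in_itv /= => hy.
case: St => a1 b1 c1' bl ca.
have A2 : 2 <= a%:R :> R by rewrite (ler_nat R 2); lia.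
have AQ : 2 * a%:R ^+ 2 <= (q n)%:R :> R.
  by rewrite -natrX -(natrM R 2) ler_nat.
have [h|h] := real_nb A2 AQ hy.
  exists 1; split; [by left|]; rewrite in_itv /= intrD [(_ + _) / _]mulrDl.
  exact: h.
exists (-1); split; [by right|]; rewrite in_itv /= intrD [(_ + _) / _]mulrDl.
have -> : (-1 : int)%:~R / (q n)%:R = - (1 / (q n)%:R) :> R by rewrite mulNr.
exact: h.
Qed.

Lemma position N : exists n, (N < n)%N /\ ((phi_inv q n).2 != 1)%N.
Proof.
have St : S_Q q (N.+2, 1, 2)%N by split => //; exact: l_pos.
exists (phi_Q q (N.+2, 1, 2)); rewrite phi_inv_phi //; split => //.
have := phi_bounds St; have := Lsum_ge q N.+1; rewrite /=; lia.
Qed.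

End Main.

Section Konig.
Variable R : realType.
Variable q : nat -> nat.
Hypothesis qbasic : basic_seq q.
Hypothesis qinf : infinite_in_limit q.
Variable x : R.

Definition agree (n : nat) (p e : nat -> int) := forall m, (1 <= m <= n)%N -> e m = p m.

Definition good (n : nat) (p : nat -> int) := forall eps : R, 0 < eps ->
  exists e, Gok R q e /\ agree n p e /\ `|x - Xval R q e| < eps.

Lemma notgood n p : ~ good n p -> exists2 eps : R, 0 < eps &
  forall e, Gok R q e -> agree n p e -> eps <= `|x - Xval R q e|.
Proof.
move=> ng.
case: (pselect (exists2 eps : R, 0 < eps & forall e, Gok R q e -> agree n p e ->
  eps <= `|x - Xval R q e|)) => // nex.
exfalso; apply: ng => eps eps0.
case: (pselect (exists e, Gok R q e /\ agree n p e /\ `|x - Xval R q e| < eps)) => // ne.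
exfalso; apply: nex; exists eps => // e Ge ag.
by rewrite leNgt; apply/negP => lt; apply: ne; exists e.
Qed.

Lemma good_ext n p : good n p -> exists d, good n.+1 (upd p n.+1 d).
Proof.
move=> gp.
case: (pselect (exists d, good n.+1 (upd p n.+1 d))) => // nex; exfalso.
have fin : forall k : nat, exists2 eps : R, 0 < eps & forall d : int,
    (0 <= d)%R -> (d < k%:Z)%R -> forall e, Gok R q e -> agree n.+1 (upd p n.+1 d) e ->
    eps <= `|x - Xval R q e|.
  elim=> [|k [e1 e10 IH]].
    by exists 1 => // d d0 dk; exfalso; lia.
  have [e2 e20 H2] : exists2 eps : R, 0 < eps & forall e, Gok R q e ->
      agree n.+1 (upd p n.+1 k%:Z) e -> eps <= `|x - Xval R q e|.
    by apply: notgood => g; apply: nex; exists k%:Z.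
  exists (Num.min e1 e2); first by rewrite lt_min e10 e20.
  move=> d d0 dk e Ge ag.
  have [dlt|dge] := ltP d k%:Z.
    by rewrite ge_min (IH d d0 dlt e Ge ag).
  have dk' : d = k%:Z by lia.
  rewrite dk' in ag.
  by rewrite ge_min (H2 _ Ge ag) orbT.
have [eps eps0 H] := fin (q n.+1).
have [e [Ge [ag lt]]] := gp eps eps0.
have [h1 h2] := Dok_of_G qbasic qinf Ge (ltn0Sn n).
have ag' : agree n.+1 (upd p n.+1 (e n.+1)) e.
  move=> m /andP[m1 mn]; rewrite /upd; case: eqP => [->|ne] //.
  by apply: ag; rewrite m1 /=; lia.
have := H (e n.+1) h1 (_ : (e n.+1 < (q n.+1)%:Z)%R) e Ge ag'.
have hlt : (e n.+1 < (q n.+1)%:Z)%R by lia.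
have := H _ h1 hlt e Ge ag'.
by rewrite leNgt lt.
Qed.

Hypothesis hx : forall eps : R, 0 < eps -> exists e, Gok R q e /\ `|x - Xval R q e| < eps.

Fixpoint pp (k : nat) : nat -> int :=
  if k is k'.+1 then upd (pp k') k'.+1 (xget 0 [set d | good k'.+1 (upd (pp k') k'.+1 d)])
  else fun _ => 0.

Lemma pp_good k : good k (pp k).
Proof.
elim: k => [|k IH].
  move=> eps eps0; have [e [Ge lt]] := hx eps0; exists e; split => //; split => //.
  by move=> m /andP[m1 m0]; exfalso; lia.
exact: (xgetPex 0 (good_ext IH)).
Qed.

Lemma pp_stable j m : pp (m + j) m = pp m m.
Proof.
elim: j => [|j IH]; first by rewrite addn0.
rewrite addnS /= /upd; case: eqP => [h|_] //; lia.
Qed.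

Definition estar m := pp m m.

Lemma estar_agree n : agree n (pp n) estar.
Proof.
move=> m /andP[m1 mn]; have := pp_stable (n - m) m; rewrite subnKC // => ->.
Qed.

Lemma estar_G : Gok R q estar.
Proof.
move=> m m1; have [e [Ge [ag _]]] := pp_good m (ltr01 : (0 : R) < 1).
have := Ge m m1; rewrite ag //; apply/andP; split => //.
Qed.

Lemma estar_X : Xval R q estar = x.
Proof.
have Ds := Dok_of_G qbasic qinf estar_G.
have : `|x - Xval R q estar| = 0 -> Xval R q estar = x.
  by move/eqP; rewrite normr_eq0 subr_eq0 => /eqP ->.
apply; apply/eqP; rewrite eq_le normr_ge0 andbT leNgt; apply/negP => dpos.
pose d : R := `|x - Xval R q estar|; have {}dpos : 0 < d by [].
have dd : `|x - Xval R q estar| = d by [].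
have d2 : 0 < d / 2 by rewrite divr_gt0.
have [N HN] := Qp_small qbasic d2.
have [e [Ge [ag lt]]] := pp_good N d2.
have agr : forall m, (1 <= m <= N)%N -> estar m = e m.
  by move=> m hm; rewrite (ag m hm) (estar_agree hm).
have hc := @Xclose R q qbasic estar e N Ds (Dok_of_G qbasic qinf Ge) agr.
have hn := HN N (leqnn N).
have ht : d <= `|x - Xval R q e| + `|Xval R q e - Xval R q estar| := ler_distD _ _ _.
have hc' : `|Xval R q e - Xval R q estar| <= 1 / Qp R q N by rewrite distrC.
lra.
Qed.

End Konig.

Lemma closed_Theta (R : realType) q : basic_seq q -> infinite_in_limit q ->
  closed (@Theta_Q R q).
Proof.
move=> qb qi x clx; apply/ThetaE.
have hx : forall eps : R, 0 < eps -> exists e, Gok R q e /\ `|x - Xval R q e| < eps.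
  move=> eps eps0; have [y [Ty By]] := clx _ (nbhsx_ballx x eps eps0).
  have [e [Ge Ey]] := (ThetaE q y).1 Ty.
  by exists e; split => //; move: By; rewrite Ey -ball_normE /ball_ /=.
exists (estar q x); split; first exact: (estar_G qb qi hx).
by rewrite (estar_X qb qi hx).
Qed.

Lemma Theta_limit (R : realType) q : basic_seq q -> infinite_in_limit q ->
  @Theta_Q R q `<=` limit_point (@Theta_Q R q).
Proof.
move=> qb qi x /(ThetaE q x) [e [Ge ->]] U /nbhs_ballP [eps /= eps0 sub].
have [N HN] := Qp_small qb eps0.
have [[|m] [Nn cn]] := position q N; first by [].
have m1 : (1 <= m.+1)%N by [].
have [s [s1 Ps]] := nb qb qi Ge m1 cn.
pose e' := upd e m.+1 (e m.+1 + s).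
have Ge' : Gok R q e' := G_upd Ge Ps.
have De := Dok_of_G qb qi Ge; have De' := Dok_of_G qb qi Ge'.
have ag : forall k, (1 <= k <= m)%N -> e k = e' k.
  by move=> k /andP[_ km]; rewrite /e' /upd; case: eqP => // h; lia.
have ag' : forall k, (1 <= k <= m)%N -> e' k = e k by move=> k /ag ->.
have hc := @Xclose R q qb e e' m De De' ag.
have Nm : (N <= m)%N by rewrite -ltnS.
have hn := HN m Nm.
exists (Xval R q e'); split.
- case: s1 => s1; subst s.
  + have lt : e m.+1 < e' m.+1 by rewrite /e' /upd eqxx; lia.
    by rewrite gt_eqF // (@Xlt R q qb e e' m De De' ag lt).
  + have lt : e' m.+1 < e m.+1 by rewrite /e' /upd eqxx; lia.
    by rewrite lt_eqF // (@Xlt R q qb e' e m De' De ag' lt).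
- by apply/ThetaE; exists e'.
- apply: sub; rewrite -ball_normE /ball_ /=; lra.
Qed.

Theorem mainTheorem3 (R : realType) (q : nat -> nat) :
  basic_seq q -> infinite_in_limit q -> perfect_set (@Theta_Q R q).
Proof.
move=> qb qi; split; first exact: closed_Theta.
apply/seteqP; split; last exact: Theta_limit.
by move=> x lx; apply: (closed_Theta qb qi); exact: subset_limit_point.
Qed.
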